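(* The following density statements hold, both with respect to the norm $\|\cdot\|$: \begin{itemize} \item the invertible elements of $B_0$ are dense in $B_0$; \item the selfadjoint (real valued) invertible elements of $B_0$ are dense in the set of all selfadjoint elements of $B_0$. \end{itemize}
   Context: Let $\mathbb{N} = \{1, 2, \dots\}$ and let $B = C_0(\mathbb{N})^+ = \{a \in \ell^\infty(\mathbb{N}) : \lim_{n\to\infty} a(n) \text{ exists}\}$, with the supremum norm $\|\cdot\|_\infty$ and pointwise operations. Let $\lambda(a) = \lim_{n\to\infty} a(n)$ for $a \in B$. Define \[ B_0 = \{a \in B : \lim_{n\to\infty} n[a(n) - \lambda(a)] \text{ exists}\}. \] For $a \in B_0$, set \[ \|a\|_\omega = \sup_{n \in \mathbb{N}} n|a(n) - \lambda(a)| \quad\text{and}\quad \|a\| = \|a\|_\infty + \|a\|_\omega . \] $B_0$ is a unital Banach *-algebra in $\|\cdot\|$, with pointwise operations and the involution $a^*(n) = \overline{a(n)}$. *)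

(* Defs.v *)
From Stdlib Require Import Reals.
From Coquelicot Require Import Coquelicot.
Open Scope R_scope.

(* A sequence a : N -> C, N = {1,2,...}, is represented by s : nat -> C
   with s k = a (k+1).  Thus the weight n in n[a(n) - lambda(a)] is INR (k+1). *)

Definition cseq_lim (s : nat -> C) (l : C) : Prop :=
  filterlim s eventually (locally l).

Definition lam (s : nat -> C) : C :=
  (real (Lim_seq (fun k => Re (s k))), real (Lim_seq (fun k => Im (s k)))).

Definition inB (s : nat -> C) : Prop := exists l : C, cseq_lim s l.

Definition inB0 (s : nat -> C) : Prop :=
  exists l : C, cseq_lim s l /\
    exists m : C, cseq_lim (fun k => Cmult (RtoC (INR (k + 1))) (Cminus (s k) l)) m.

Definition norm_sup (s : nat -> C) : R :=
  real (Lub_Rbar (fun x => exists k : nat, x = Cmod (s k))).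

Definition norm_omega (s : nat -> C) : R :=
  real (Lub_Rbar (fun x => exists k : nat, x = INR (k + 1) * Cmod (Cminus (s k) (lam s)))).

Definition normB0 (s : nat -> C) : R := norm_sup s + norm_omega s.

Definition invertibleB0 (s : nat -> C) : Prop :=
  exists t : nat -> C, inB0 t /\ (forall k, Cmult (s k) (t k) = RtoC 1) /\
                        (forall k, Cmult (t k) (s k) = RtoC 1).

Definition selfadjointB0 (s : nat -> C) : Prop := forall k, Cconj (s k) = s k.

(* Main.v *)
Require Import Defs.
From Stdlib Require Import Reals Lra Lia ZArith.
From Coquelicot Require Import Coquelicot.
Open Scope R_scope.

Lemma clim_eps (s : nat -> C) (l : C) :
  cseq_lim s l <-> forall eps, 0 < eps -> exists N, forall n, (N <= n)%nat -> Cmod (Cminus (s n) l) < eps.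
Proof.
  unfold cseq_lim. rewrite (@filterlim_locally_ball_norm C_AbsRing). split.
  - intros H eps He. destruct (H (mkposreal eps He)) as [N HN]. exists N. intros n Hn.
    exact (HN n Hn).
  - intros H eps. destruct (H eps (cond_pos eps)) as [N HN]. exists N. intros n Hn.
    apply HN; auto.
  - apply eventually_filter.
Qed.

Lemma clim_plus s t x y : cseq_lim s x -> cseq_lim t y ->
  cseq_lim (fun k => Cplus (s k) (t k)) (Cplus x y).
Proof.
  intros H1 H2. unfold cseq_lim.
  eapply filterlim_comp_2. exact H1. exact H2. exact (@filterlim_plus C_AbsRing C_NormedModule x y).
Qed.

Lemma clim_mult s t x y : cseq_lim s x -> cseq_lim t y ->
  cseq_lim (fun k => Cmult (s k) (t k)) (Cmult x y).
Proof.
  rewrite !clim_eps. intros H1 H2 eps He.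
  set (d := Rmin 1 (eps / (2 * (Cmod y + 1 + Cmod x)))).
  assert (Hx := Cmod_ge_0 x). assert (Hy := Cmod_ge_0 y).
  assert (Hd : 0 < d). { unfold d. apply Rmin_pos. lra. apply Rdiv_lt_0_compat; lra. }
  destruct (H1 d Hd) as [N1 HN1]. destruct (H2 d Hd) as [N2 HN2].
  exists (N1 + N2)%nat. intros n Hn.
  specialize (HN1 n ltac:(lia)). specialize (HN2 n ltac:(lia)).
  replace (Cminus (Cmult (s n) (t n)) (Cmult x y)) with
    (Cplus (Cmult (Cminus (s n) x) (t n)) (Cmult x (Cminus (t n) y))) by (unfold Cminus; ring).
  eapply Rle_lt_trans. apply Cmod_triangle. rewrite !Cmod_mult.
  assert (Ht : Cmod (t n) <= Cmod y + 1).
  { replace (t n) with (Cplus (Cminus (t n) y) y) by (unfold Cminus; ring).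
    eapply Rle_trans. apply Cmod_triangle. assert (d <= 1) by apply Rmin_l. lra. }
  assert (Hd2 : d * (2 * (Cmod y + 1 + Cmod x)) <= eps).
  { assert (d <= eps / (2 * (Cmod y + 1 + Cmod x))) by apply Rmin_r.
    apply Rmult_le_compat_r with (r := 2 * (Cmod y + 1 + Cmod x)) in H; [|lra].
    unfold Rdiv in H. rewrite Rmult_assoc, Rinv_l in H by lra. lra. }
  assert (A1 : Cmod (Cminus (s n) x) * Cmod (t n) <= d * (Cmod y + 1)).
  { apply Rmult_le_compat; try apply Cmod_ge_0; lra. }
  assert (A2 : Cmod x * Cmod (Cminus (t n) y) <= Cmod x * d).
  { apply Rmult_le_compat_l; lra. }
  assert (A3 : Cmod (Cminus (s n) x) * Cmod (t n) < d * (Cmod y + 1) \/ Cmod x * Cmod (Cminus (t n) y) < Cmod x * d \/ True) by auto.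
  assert (Hpos : Cmod (Cminus (s n) x) * Cmod (t n) < d * (Cmod y + 1)).
  { apply Rle_lt_trans with (Cmod (Cminus (s n) x) * (Cmod y + 1)).
    apply Rmult_le_compat_l; [apply Cmod_ge_0|lra].
    apply Rmult_lt_compat_r; lra. }
  nra.
Qed.

Lemma clim_const (x : C) : cseq_lim (fun _ => x) x.
Proof. unfold cseq_lim. apply filterlim_const. Qed.

Lemma clim_ext s t x : (forall k, s k = t k) -> cseq_lim s x -> cseq_lim t x.
Proof.
  intros E H. unfold cseq_lim. eapply filterlim_ext. exact E. exact H.
Qed.

Lemma clim_bound0 (s : nat -> C) (M : R) : (forall k, Cmod (s k) <= M / INR (k+1)) -> cseq_lim s 0.
Proof.
  intros H. apply clim_eps. intros eps He.
  destruct (archimed (Rabs M / eps)) as [H1 _].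
  assert (0 <= up (Rabs M / eps))%Z.
  { apply le_IZR. assert (0 <= Rabs M / eps). { apply Rdiv_le_0_compat; [apply Rabs_pos|lra]. } lra. }
  exists (Z.to_nat (up (Rabs M / eps))). intros n Hn.
  replace (Cminus (s n) 0) with (s n) by (unfold Cminus; rewrite Copp_0, Cplus_0_r; auto).
  eapply Rle_lt_trans. apply H.
  assert (Hn' : IZR (up (Rabs M / eps)) <= INR n).
  { rewrite <- (Z2Nat.id (up _)) by auto. rewrite <- INR_IZR_INZ. apply le_INR. auto. }
  assert (Hpos : 0 < INR (n+1)). { apply lt_0_INR. lia. }
  rewrite plus_INR in *. simpl in *.
  apply Rmult_lt_reg_r with (INR n + 1). lra.
  unfold Rdiv. rewrite Rmult_assoc, Rinv_l by lra. rewrite Rmult_1_r.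
  apply Rle_lt_trans with (Rabs M). apply Rle_abs.
  assert (Rabs M / eps < INR n + 1) by lra.
  apply Rmult_lt_compat_r with (r := eps) in H2; [|lra].
  unfold Rdiv in H2. rewrite Rmult_assoc, Rinv_l in H2 by lra. lra.
Qed.

Lemma clim_inv s L : cseq_lim s L -> L <> RtoC 0 ->
  cseq_lim (fun k => Cinv (s k)) (Cinv L).
Proof.
  rewrite !clim_eps. intros H HL eps He.
  assert (Hp : 0 < Cmod L) by (apply Cmod_gt_0; auto).
  set (p := Cmod L) in *.
  set (d := Rmin (p/2) (eps * p * p / 2)).
  assert (Hd : 0 < d). { unfold d. apply Rmin_pos. lra. apply Rdiv_lt_0_compat; try lra. apply Rmult_lt_0_compat; nra. }
  destruct (H d Hd) as [N HN]. exists N. intros n Hn. specialize (HN n Hn).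
  assert (Hd1 : d <= p/2) by apply Rmin_l.
  assert (Hd2 : d <= eps * p * p / 2) by apply Rmin_r.
  assert (Hm : p / 2 < Cmod (s n)).
  { assert (Cmod L <= Cmod (s n) + Cmod (Cminus (s n) L)).
    { replace L with (Cplus (s n) (Copp (Cminus (s n) L))) at 1 by (unfold Cminus; ring).
      eapply Rle_trans. apply Cmod_triangle. rewrite Cmod_opp. lra. }
    fold p in H0. lra. }
  assert (Hs : s n <> RtoC 0).
  { intro E. rewrite E, Cmod_0 in Hm. lra. }
  replace (Cminus (Cinv (s n)) (Cinv L)) with
    (Cmult (Copp (Cminus (s n) L)) (Cinv (Cmult (s n) L))).
  2:{ unfold Cminus. field. split; auto. }
  rewrite Cmod_mult, Cmod_opp, Cmod_inv, Cmod_mult.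
  2:{ intro E. apply (f_equal Cmod) in E. rewrite Cmod_mult, Cmod_0 in E. fold p in E. nra. }
  fold p. set (m := Cmod (s n)) in *. set (e := Cmod (Cminus (s n) L)) in *.
  assert (0 < m * p) by nra.
  apply Rmult_lt_reg_r with (m * p). auto.
  rewrite Rmult_assoc, Rinv_l by lra. nra.
Qed.

Lemma im_le_Cmod' c : Rabs (Im c) <= Cmod c.
Proof.
  pose proof (Cmod2_alt c). pose proof (pow2_abs (Im c)). pose proof (Cmod_ge_0 c).
  pose proof (Rabs_pos (Im c)).
  destruct (Rle_or_lt (Rabs (Im c)) (Cmod c)); auto. exfalso. nra.
Qed.

Lemma lam_lim s l : cseq_lim s l -> lam s = l.
Proof.
  rewrite clim_eps. intros H.
  assert (HR : is_lim_seq (fun k => Re (s k)) (Re l)).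
  { apply is_lim_seq_spec. intros eps. destruct (H eps (cond_pos eps)) as [N HN].
    exists N. intros n Hn. specialize (HN n Hn).
    eapply Rle_lt_trans; [|exact HN].
    replace (Re (s n) - Re l) with (Re (Cminus (s n) l)) by (destruct (s n), l; simpl; ring).
    apply re_le_Cmod. }
  assert (HI : is_lim_seq (fun k => Im (s k)) (Im l)).
  { apply is_lim_seq_spec. intros eps. destruct (H eps (cond_pos eps)) as [N HN].
    exists N. intros n Hn. specialize (HN n Hn).
    eapply Rle_lt_trans; [|exact HN].
    replace (Im (s n) - Im l) with (Im (Cminus (s n) l)) by (destruct (s n), l; simpl; ring).
    apply im_le_Cmod'. }
  unfold lam. rewrite (is_lim_seq_unique _ _ HR), (is_lim_seq_unique _ _ HI).
  simpl. destruct l; reflexivity.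
Qed.

Lemma sup_le (f : nat -> R) (M : R) : (forall k, 0 <= f k <= M) ->
  real (Lub_Rbar (fun x => exists k : nat, x = f k)) <= M.
Proof.
  intros H. destruct (Lub_Rbar_correct (fun x => exists k : nat, x = f k)) as [Hub Hlub].
  assert (H1 : Rbar_le (Lub_Rbar (fun x => exists k : nat, x = f k)) M).
  { apply Hlub. intros x [k ->]. simpl. apply H. }
  destruct (H 0%nat).
  destruct (Lub_Rbar _); simpl in *; auto; lra.
Qed.

From Stdlib Require Import ClassicalDescription Classical.

Lemma clim_eqlim s x y : cseq_lim s x -> x = y -> cseq_lim s y.
Proof. intros H ->. exact H. Qed.

Lemma conj_R (r : R) : Cconj (RtoC r) = RtoC r.
Proof. unfold Cconj, RtoC. simpl. f_equal. ring. Qed.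

Lemma pick_g (l : C) (eps : R) : 0 < eps ->
  exists g : R, 0 < g /\ g <= eps / 4 /\ Cplus l (RtoC g) <> RtoC 0.
Proof.
  intros He. destruct (classic (Cplus l (RtoC (eps/4)) = RtoC 0)) as [E|E].
  - exists (eps/8). split; [lra|split; [lra|]].
    intro E2. assert (Hd : Cminus (Cplus l (RtoC (eps/4))) (Cplus l (RtoC (eps/8))) = RtoC 0)
      by (rewrite E, E2; unfold Cminus; ring).
    apply (f_equal fst) in Hd. destruct l. simpl in Hd. lra.
  - exists (eps/4). split; [lra|split; [lra|auto]].
Qed.

Lemma main_lemma (a : nat -> C) : inB0 a -> forall eps : R, 0 < eps ->
  exists b : nat -> C, inB0 b /\ invertibleB0 b /\
    normB0 (fun k => Cminus (a k) (b k)) < eps /\ (selfadjointB0 a -> selfadjointB0 b).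
Proof.
  intros [l [Hl [m Hm]]] eps He.
  destruct (pick_g l eps He) as [g [Hg1 [Hg2 HL]]].
  set (eta := eps / 8).
  assert (Heta : 0 < eta) by (unfold eta; lra).
  set (d := fun k : nat => if excluded_middle_informative (Cplus (a k) (RtoC g) = RtoC 0)
                           then RtoC (eta / (INR (k+1) * INR (k+1))) else RtoC 0).
  assert (Hx : forall k : nat, 1 <= INR (k+1)).
  { intros k. replace 1 with (INR 1) by reflexivity. apply le_INR. lia. }
  assert (D1 : forall k, INR (k+1) * Cmod (d k) <= eta / INR (k+1)).
  { intros k. specialize (Hx k). unfold d. destruct excluded_middle_informative.
    - rewrite Cmod_R, Rabs_pos_eq.
      + unfold Rdiv. field_simplify; lra.
      + apply Rlt_le, Rdiv_lt_0_compat; nra.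
    - rewrite Cmod_R, Rabs_R0, Rmult_0_r. apply Rlt_le, Rdiv_lt_0_compat; lra. }
  assert (D2 : forall k, Cmod (d k) <= eta / INR (k+1)).
  { intros k. specialize (D1 k). specialize (Hx k). pose proof (Cmod_ge_0 (d k)). nra. }
  assert (D3 : forall k, Cmod (d k) <= eta).
  { intros k. specialize (D2 k). specialize (Hx k).
    assert (eta / INR (k+1) <= eta).
    { apply Rmult_le_reg_r with (INR (k+1)). lra. unfold Rdiv. rewrite Rmult_assoc, Rinv_l by lra. nra. }
    lra. }
  assert (D4 : forall k, Cplus (a k) (Cplus (RtoC g) (d k)) <> RtoC 0).
  { intros k. unfold d. destruct excluded_middle_informative as [E|E].
    - intro E2. assert (Hz : RtoC (eta / (INR (k+1) * INR (k+1))) = RtoC 0).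
      { transitivity (Cminus (Cplus (a k) (Cplus (RtoC g) (RtoC (eta / (INR (k+1) * INR (k+1)))))) (Cplus (a k) (RtoC g))).
        unfold Cminus; ring. rewrite E2, E. unfold Cminus; ring. }
      apply (f_equal fst) in Hz. simpl in Hz. specialize (Hx k).
      assert (0 < eta / (INR (k+1) * INR (k+1))) by (apply Rdiv_lt_0_compat; nra). lra.
    - replace (Cplus (a k) (Cplus (RtoC g) (RtoC 0))) with (Cplus (a k) (RtoC g)) by ring. auto. }
  assert (D5 : forall k, Cconj (d k) = d k).
  { intros k. unfold d. destruct excluded_middle_informative; apply conj_R. }
  assert (Cd : cseq_lim d (RtoC 0)). { apply (clim_bound0 _ eta). exact D2. }
  assert (Cwd : cseq_lim (fun k => Cmult (RtoC (INR (k+1))) (d k)) (RtoC 0)).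
  { apply (clim_bound0 _ eta). intros k. rewrite Cmod_mult, Cmod_R, Rabs_pos_eq. apply D1.
    specialize (Hx k). lra. }
  set (L := Cplus l (RtoC g)).
  set (b := fun k => Cplus (a k) (Cplus (RtoC g) (d k))).
  assert (Cb : cseq_lim b L).
  { apply clim_eqlim with (Cplus l (Cplus (RtoC g) (RtoC 0))).
    apply clim_plus; auto. apply clim_plus; auto. apply clim_const.
    unfold L. ring. }
  assert (Cwb : cseq_lim (fun k => Cmult (RtoC (INR (k + 1))) (Cminus (b k) L)) (Cplus m (RtoC 0))).
  { eapply clim_ext. 2:{ apply clim_plus. exact Hm. exact Cwd. }
    intros k. simpl. unfold b, L, Cminus. ring. }
  assert (HL2 : Cmult L L <> RtoC 0).
  { intro E. apply (f_equal Cmod) in E. rewrite Cmod_mult, Cmod_0 in E.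
    assert (0 < Cmod L) by (apply Cmod_gt_0; auto). nra. }
  set (t := fun k => Cinv (b k)).
  assert (Ct : cseq_lim t (Cinv L)). { apply clim_inv; auto. }
  assert (Cbl : cseq_lim (fun k => Cinv (Cmult (b k) L)) (Cinv (Cmult L L))).
  { apply clim_inv; auto. apply clim_mult; auto. apply clim_const. }
  assert (Hb : inB0 b).
  { exists L. split; auto. eexists. exact Cwb. }
  assert (Ht : inB0 t).
  { exists (Cinv L). split; auto. eexists.
    eapply clim_ext.
    2:{ apply clim_mult. apply clim_mult. exact Cwb. exact Cbl. apply (clim_const (RtoC (-1))). }
    intros k. simpl. unfold t, Cminus. field. split; auto. apply D4. }
  exists b. split; [exact Hb|]. split.
  { exists t. split; auto. split; intros k; unfold t.
    - apply Cinv_r. apply D4.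
    - apply Cinv_l. apply D4. }
  split.
  2:{ intros Ha k. unfold b. rewrite !Cplus_conj, Ha, D5, conj_R. reflexivity. }
  set (e := fun k => Cminus (a k) (b k)).
  assert (Ee : forall k, e k = Copp (Cplus (RtoC g) (d k))).
  { intros k. unfold e, b, Cminus. ring. }
  assert (Ce : cseq_lim e (Copp (RtoC g))).
  { eapply clim_eqlim.
    - eapply clim_ext. 2:{ apply clim_plus. apply (clim_const (Copp (RtoC g))).
        apply clim_mult. apply (clim_const (RtoC (-1))). exact Cd. }
      intros k. rewrite Ee. simpl. ring.
    - ring. }
  unfold normB0. fold e.
  assert (N1 : norm_sup e <= g + eta).
  { unfold norm_sup. apply sup_le. intros k. split. apply Cmod_ge_0.
    rewrite Ee, Cmod_opp. eapply Rle_trans. apply Cmod_triangle. rewrite Cmod_R, Rabs_pos_eq by lra.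
    specialize (D3 k). lra. }
  assert (N2 : norm_omega e <= eta).
  { unfold norm_omega. rewrite (lam_lim _ _ Ce). apply sup_le. intros k.
    specialize (Hx k). split. pose proof (Cmod_ge_0 (Cminus (e k) (Copp (RtoC g)))). nra.
    replace (Cminus (e k) (Copp (RtoC g))) with (Copp (d k)) by (rewrite Ee; unfold Cminus; ring).
    rewrite Cmod_opp. specialize (D1 k).
    assert (eta / INR (k+1) <= eta).
    { apply Rmult_le_reg_r with (INR (k+1)). lra. unfold Rdiv. rewrite Rmult_assoc, Rinv_l by lra. nra. }
    lra. }
  unfold eta in *. lra.
Qed.

Theorem proposition4p11 :
  (forall a : nat -> C, inB0 a -> forall eps : R, 0 < eps ->
     exists b : nat -> C, inB0 b /\ invertibleB0 b /\
       normB0 (fun k => Cminus (a k) (b k)) < eps) /\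
  (forall a : nat -> C, inB0 a -> selfadjointB0 a -> forall eps : R, 0 < eps ->
     exists b : nat -> C, inB0 b /\ selfadjointB0 b /\ invertibleB0 b /\
       normB0 (fun k => Cminus (a k) (b k)) < eps).
Proof.
  split.
  - intros a Ha eps He. destruct (main_lemma a Ha eps He) as [b [H1 [H2 [H3 _]]]].
    exists b. auto.
  - intros a Ha Hs eps He. destruct (main_lemma a Ha eps He) as [b [H1 [H2 [H3 H4]]]].
    exists b. auto.
Qed.
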